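(* Let $V$ be a finite set with $|V|\ge 2$, let $A$ be a real symmetric matrix indexed by $V$, and let $(X,Y)$ be a separation of $A$. If $x\in X\setminus Y$ is a simplicial vertex of the principal submatrix $A[X]$, then $x$ is a simplicial vertex of $A$.
   Context: $\min A=\min\{A_{xy}:x\ne y\in V\}$. A separation of $A$ is a pair $(X,Y)$ of subsets of $V$ with $X\cup Y=V$, $X\setminus Y\neq\emptyset$, $Y\setminus X\ne\emptyset$, and $A_{xy}=\min A$ for all $x\in X\setminus Y$, $y\in Y\setminus X$. $A[X]$ denotes the principal submatrix of $A$ indexed by $X$. An element $v$ is simplicial in a symmetric matrix $B$ indexed by $U$ if $B_{yz}\ge\min\{B_{vy},B_{vz}\}$ for all distinct $y,z\in U\setminus\{v\}$. *)

(* Defs.v *)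
From mathcomp Require Import all_boot all_order all_algebra.
Set Implicit Arguments. Unset Strict Implicit. Unset Printing Implicit Defensive.
Import Order.TTheory GRing.Theory Num.Theory.
Local Open Scope ring_scope.

Definition symmetric_mx (R : realFieldType) (V : finType) (A : V -> V -> R) :=
  forall x y, A x y = A y x.

Definition offdiag (R : realFieldType) (V : finType) (A : V -> V -> R) : seq R :=
  [seq A p.1 p.2 | p <- enum [pred p : V * V | p.1 != p.2]].

(* min A = min { A_xy : x <> y } (meaningful when |V| >= 2; 0 otherwise). *)
Definition minA (R : realFieldType) (V : finType) (A : V -> V -> R) : R :=
  match offdiag A with
  | [::] => 0
  | a :: s => foldr Num.min a s
  end.

Definition separation (R : realFieldType) (V : finType) (A : V -> V -> R)
  (X Y : {set V}) : Prop :=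
  [/\ X :|: Y = setT, X :\: Y != set0, Y :\: X != set0 &
      forall x y, x \in X :\: Y -> y \in Y :\: X -> A x y = minA A].

Definition simplicial_in (R : realFieldType) (V : finType) (A : V -> V -> R)
  (U : {set V}) (v : V) : Prop :=
  forall y z, y \in U :\ v -> z \in U :\ v -> y != z ->
    A y z >= Num.min (A v y) (A v z).

Definition simplicial (R : realFieldType) (V : finType) (A : V -> V -> R) (v : V) :=
  simplicial_in A setT v.

(* Main.v *)
Require Import Defs.
From mathcomp Require Import all_boot all_order all_algebra.
Import Order.TTheory GRing.Theory Num.Theory.
Local Open Scope ring_scope.

Lemma foldr_min_le (R : realFieldType) (a : R) (s : seq R) b :
  b \in a :: s -> foldr Num.min a s <= b.
Proof.
elim: s b => [|c s IH] b /=.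
  by rewrite inE => /eqP ->.
rewrite !inE => /orP [/eqP ->|/orP [/eqP ->|H]].
- by rewrite ge_min; apply/orP; right; apply: IH; rewrite inE eqxx.
- by rewrite ge_min lexx.
- by rewrite ge_min; apply/orP; right; apply: IH; rewrite inE H orbT.
Qed.

Lemma minA_le (R : realFieldType) (V : finType) (A : V -> V -> R) (p q : V) :
  p != q -> Defs.minA A <= A p q.
Proof.
move=> npq.
have H : A p q \in offdiag A.
  apply/mapP; exists (p, q) => //; by rewrite mem_enum inE.
rewrite /Defs.minA; move: H; case: (offdiag A) => [//|a s] H.
exact: foldr_min_le.
Qed.

Theorem lemma7 (R : realFieldType) (V : finType) (A : V -> V -> R)
  (X Y : {set V}) (x : V) :
  (2 <= #|V|)%N -> symmetric_mx A -> separation A X Y ->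
  x \in X :\: Y -> simplicial_in A X x -> simplicial A x.
Proof.
move=> _ _ [XY _ _ Hsep] xXY Hs y z.
rewrite !inE => /andP [yx _] /andP [zx _] yz.
have inY w : w \notin X -> w \in Y :\: X.
  move=> wX; rewrite inE wX /=.
  have : w \in X :|: Y by rewrite XY inE.
  by rewrite inE (negbTE wX).
case: (boolP (y \in X)) => yX; last first.
  rewrite (Hsep x y xXY (inY _ yX)) ge_min; apply/orP; left; exact: minA_le.
case: (boolP (z \in X)) => zX; last first.
  rewrite (Hsep x z xXY (inY _ zX)) ge_min; apply/orP; right; exact: minA_le.
by apply: Hs => //; rewrite !inE ?yx ?zx.
Qed.
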